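(* For $n \ge 2$ with $n \equiv 2 \pmod 6$, if $G \cong P_n$ and $v$ is an arbitrary vertex of $G$, then $\gamma_{\rm tg}(G|v) \le \gamma_{\rm tg}(G) - 1$.
   Context: Total domination game on a graph without isolated vertices: Dominator and Staller alternately choose vertices, each chosen vertex must be adjacent to some vertex not yet totally dominated; the game ends when no legal move exists; Dominator minimizes, Staller maximizes the number of moves; $\gamma_{\rm tg}(G)$ is the number of moves in the Dominator-start game under optimal play. $G|v$ is $G$ with $v$ declared already totally dominated, and $\gamma_{\rm tg}(G|v)$ is the corresponding optimal number of moves in the Dominator-start game. *)

(* Defs.v *)
From mathcomp Require Import all_boot.
Set Implicit Arguments. Unset Strict Implicit. Unset Printing Implicit Defensive.

Section TotalDominationGame.
Variables (T : finType) (e : rel T).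

Definition nbhd (u : T) : {set T} := [set w | e u w].

(* D = set of vertices already totally dominated.  A vertex u is a legal
   move iff it is adjacent to some vertex not yet totally dominated. *)
Definition legal (D : {set T}) (u : T) : bool := [exists w, e u w && (w \notin D)].

Definition legal_moves (D : {set T}) : seq T := [seq u <- enum T | legal D u].

(* Optimal number of remaining moves from position D with [dom] to move
   (true = Dominator, minimiser; false = Staller, maximiser).  [k] is fuel;
   each move strictly enlarges D, so fuel #|T|.+1 is always enough. *)
Fixpoint gval (k : nat) (dom : bool) (D : {set T}) : nat :=
  match k with
  | 0 => 0
  | k'.+1 =>
    let f u := (gval k' (~~ dom) (D :|: nbhd u)).+1 in
    match legal_moves D with
    | [::] => 0
    | u :: us => if dom then foldr (fun x m => minn (f x) m) (f u) us
                 else foldr (fun x m => maxn (f x) m) (f u) us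
    end
  end.

Definition gamma_tg : nat := gval #|T|.+1 true set0.

(* gamma_tg(G|v): Dominator-start game with v declared totally dominated. *)
Definition gamma_tg_at (v : T) : nat := gval #|T|.+1 true [set v].

End TotalDominationGame.

Definition path_rel (n : nat) : rel 'I_n :=
  fun i j => (i.+1 == j :> nat) || (j.+1 == i :> nat).

(* Main.v *)
Require Import Defs.
From mathcomp Require Import all_boot zify.
Set Implicit Arguments. Unset Strict Implicit. Unset Printing Implicit Defensive.
Set Warnings "-notation-overridden".
Definition base x := (2 * x + 1) %/ 3.
Definition c2n x := (x + 1) %/ 3 - x %/ 3.
Definition incr (r : seq nat) := if r is x :: r' then x.+1 :: r' else [:: 1].
Fixpoint runs (l : seq bool) : seq nat :=
  match l with
  | [::] => [:: 0]
  | true :: l' => 0 :: runs l'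
  | false :: l' => incr (runs l')
  end.
Definition SL l := sumn (map base (runs l)).
Definition CL l := sumn (map c2n (runs l)).

Fixpoint updr (l : seq bool) (s : nat) : seq bool :=
  match l, s with
  | [::], _ => [::]
  | _ :: l', 0 => true :: l'
  | _ :: l', 1 => true :: (if l' is _ :: l'' then true :: l'' else [::])
  | x :: l', s'.+2 => x :: updr l' s'.+1
  end.

Lemma runs_cons l : exists h t, runs l = h :: t.
Proof.
elim: l => [|[] l [h [t IH]]] /=; first by exists 0, [::].
  by exists 0, (runs l).
by rewrite IH; exists h.+1, t.
Qed.

Lemma runs_cat A : exists rA a, runs A = rcons rA a /\
  forall X, runs (A ++ X) = rA ++ (a + head 0 (runs X)) :: behead (runs X).
Proof.
elim: A => [|[] A [rA [a [E1 E2]]]] /=.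
- exists [::], 0; split => // X; by case: (runs_cons X) => h [t ->].
- exists (0 :: rA), a; rewrite E1; split => // X; by rewrite E2.
- case: rA E1 E2 => [|r0 rA] E1 E2.
  + exists [::], a.+1; rewrite E1; split => // X; rewrite E2 /=.
    by case: (runs_cons X) => h [t ->].
  + exists (r0.+1 :: rA), a; rewrite E1; split => // X; by rewrite E2.
Qed.

Lemma runs_cat_true A X : runs (A ++ true :: X) = runs A ++ runs X.
Proof.
case: (runs_cat A) => rA [a [E1 E2]]; rewrite E2 E1 /= addn0.
by rewrite -cats1 -catA.
Qed.

Lemma runs_nseq k : runs (nseq k false) = [:: k].
Proof. by elim: k => //= k ->. Qed.

Lemma SL_cat r1 r2 : sumn (map base (r1 ++ r2)) = sumn (map base r1) + sumn (map base r2).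
Proof. by rewrite map_cat sumn_cat. Qed.
Lemma CL_cat r1 r2 : sumn (map c2n (r1 ++ r2)) = sumn (map c2n r1) + sumn (map c2n r2).
Proof. by rewrite map_cat sumn_cat. Qed.

Lemma updr_cat A B s : 0 < s -> updr (A ++ B) (size A + s) = A ++ updr B s.
Proof.
move=> s0; elim: A => [|x A IH] //=.
case: (size A + s) IH (leq_addl (size A) s) => [|t] IH /=.
  by rewrite leqn0 => /eqP E; rewrite E in s0.
by rewrite -IH.
Qed.

Lemma updr_big l s : size l < s -> updr l s = l.
Proof.
elim: l s => [|x l IH] [|[|s]] //=.
by move=> H; rewrite IH.
Qed.

Lemma sum_base0 : base 0 = 0. Proof. by []. Qed.
Lemma sum_c2n0 : c2n 0 = 0. Proof. by []. Qed.

Definition effect l l' := exists k a b S0 C0,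
  (k = a + b + 1 /\ (a = 0 \/ b = 0) \/ k = a + b + 2) /\
  SL l = S0 + base k /\ CL l = C0 + c2n k /\
  SL l' = S0 + base a + base b /\ CL l' = C0 + c2n a + c2n b.

Lemma Eff l s : updr l s != l -> effect l (updr l s).
Proof.
case: s => [|s].
  case: l => [|x B] //=; case: x => /=; first by rewrite eqxx.
  move=> _; case: (runs_cons B) => h [t E].
  exists h.+1, 0, h, (sumn (map base t)), (sumn (map c2n t)).
  rewrite /SL /CL /= E /=; split; first by left; lia.
  by rewrite /base /c2n /=; lia.
case: (leqP (size l) s) => Hs; first by rewrite updr_big ?ltnS // eqxx.
rewrite -(cat_take_drop s l).
have Sz : size (take s l) = s by rewrite size_take Hs.
case Ed: (drop s l) => [|x B].
  by move: (size_drop s l); rewrite Ed /= => /eqP; rewrite eq_sym subn_eq0 leqNgt Hs.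
have -> : s.+1 = size (take s l) + 1 by rewrite Sz addn1.
rewrite updr_cat //.
case: (runs_cat (take s l)) => rA [a [E1 E2]].
rewrite /effect /SL /CL !E2.
case: B Ed => [|y B] Ed.
  case: x Ed => Ed /=; first by rewrite eqxx.
  move=> _; exists a.+1, a, 0, (sumn (map base rA)), (sumn (map c2n rA)).
  rewrite !SL_cat !CL_cat /=; split; first by left; lia.
  rewrite /base /c2n; lia.
case: (runs_cons B) => h [t E].
case: x Ed; case: y => Ed /=; try by rewrite eqxx.
all: move=> _; rewrite ?E /=.
- exists h.+1, 0, h, (sumn (map base rA) + base a + sumn (map base t)), (sumn (map c2n rA) + c2n a + sumn (map c2n t)).
  rewrite !SL_cat !CL_cat /=; split; first by left; lia.
  rewrite /base /c2n; lia.
- exists a.+1, a, 0, (sumn (map base rA) + base h + sumn (map base t)), (sumn (map c2n rA) + c2n h + sumn (map c2n t)).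
  rewrite !SL_cat !CL_cat /=; split; first by left; lia.
  rewrite /base /c2n; lia.
- exists (a + h.+2), a, h, (sumn (map base rA) + sumn (map base t)), (sumn (map c2n rA) + sumn (map c2n t)).
  rewrite !SL_cat !CL_cat /=; split; first by right; lia.
  rewrite /base /c2n; lia.
Qed.

Definition bndA (A : seq bool) rA := (rA = [::] /\ A = [::]) \/ exists A0, A = rcons A0 true /\ runs A0 = rA.
Definition bndB (B : seq bool) rB := (rB = [::] /\ B = [::]) \/ exists B0, B = true :: B0 /\ runs B0 = rB.

Lemma runs_split l rA k rB : runs l = rA ++ k :: rB ->
  exists A B, l = A ++ nseq k false ++ B /\ bndA A rA /\ bndB B rB.
Proof.
elim: l rA k rB => [|[] l IH] rA k rB /=.
- case: rA => [|? [|]] //= [<- <-]; exists [::], [::]; split => //.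
  by split; left.
- case: rA => [|r0 rA] /= [E1 E2].
  + subst k rB; exists [::], (true :: l); split => //; split; first by left.
    by right; exists l.
  + subst r0; case: (IH _ _ _ E2) => A [B [El [HA HB]]].
    exists (true :: A), B; rewrite El; split => //; split => //.
    right; case: HA => [[-> ->]|[A0 [-> <-]]]; first by exists [::].
    by exists (true :: A0).
- case: (runs_cons l) => h [t E]; rewrite E /=.
  case: rA => [|r0 rA] /= [E1 E2].
  + subst k rB; have E' : runs l = [::] ++ h :: t by [].
    case: (IH _ _ _ E') => A [B [El [HA HB]]].
    case: HA => [[_ HA]|[A0 [_ HA0]]]; last by case: (runs_cons A0) => ? [? ]; rewrite HA0.
    subst A; exists [::], B; rewrite El; split => //; split => //; by left.
  + subst r0; have E' : runs l = (h :: rA) ++ k :: rB by rewrite E E2.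
    case: (IH _ _ _ E') => A [B [El [HA HB]]].
    case: HA => [[//]|[A0 [HA HA0]]].
    exists (false :: A), B; rewrite El; split => //; split => //.
    right; exists (false :: A0); rewrite HA; split => //=.
    by rewrite HA0.
Qed.

Lemma runs_ctx A B rA rB Y : bndA A rA -> bndB B rB ->
  runs (A ++ Y ++ B) = rA ++ runs Y ++ rB.
Proof.
move=> HA HB.
have HY : runs (Y ++ B) = runs Y ++ rB.
  case: HB => [[-> ->]|[B0 [-> <-]]]; first by rewrite !cats0.
  by rewrite runs_cat_true.
case: HA => [[-> ->]|[A0 [-> <-]]] //.
by rewrite -cats1 -catA /= runs_cat_true HY.
Qed.

Lemma mv_first2 A B k : 1 < k ->
  updr (A ++ nseq k false ++ B) (size A + 1) = A ++ (true :: true :: nseq (k - 2) false) ++ B.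
Proof.
move=> Hk; rewrite updr_cat //; congr (_ ++ _).
by case: k Hk => [|[|k]] //= _; rewrite subn2.
Qed.

Lemma mv_endR A B k rB : 0 < k -> bndB B rB ->
  updr (A ++ nseq k false ++ B) (size A + k) = A ++ (nseq (k - 1) false ++ [:: true]) ++ B.
Proof.
case: k => // k _ HB; rewrite subn1 /=.
have -> : false :: nseq k false ++ B = nseq k false ++ false :: B by elim: k => //= k ->.
have -> : size A + k.+1 = size (A ++ nseq k false) + 1 by rewrite size_cat size_nseq addn1 addnS.
rewrite catA updr_cat // -!catA; congr (_ ++ _); congr (_ ++ _) => /=.
by case: HB => [[_ ->]|[B0 [-> _]]].
Qed.

Lemma mv_endL A B k rA : 0 < k -> bndA A rA ->
  updr (A ++ nseq k false ++ B) (size A) = A ++ (true :: nseq (k - 1) false) ++ B.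
Proof.
case: k => // k _ HA; rewrite subn1 /=.
case: HA => [[_ ->]|[A0 [-> _]]] //.
by rewrite size_rcons -addn1 -cats1 -!catA updr_cat.
Qed.

Lemma runs_Y1 j : runs (true :: true :: nseq j false) = [:: 0; 0; j].
Proof. by rewrite /= runs_nseq. Qed.
Lemma runs_Y2 j : runs (nseq j false ++ [:: true]) = [:: j; 0].
Proof. by rewrite runs_cat_true runs_nseq. Qed.
Lemma runs_Y3 j : runs (true :: nseq j false) = [:: 0; j].
Proof. by rewrite /= runs_nseq. Qed.

Lemma count_ctx A B Y Z : count id Y < count id Z -> A ++ Z ++ B != A ++ Y ++ B.
Proof.
move=> H; apply/negP => /eqP E; move: (congr1 (count id) E).
rewrite !count_cat => E'; lia.
Qed.

Lemma updr_map (h : nat -> bool) m : forall o s,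
  updr [seq h t | t <- iota o m] s = [seq h t || (t.+1 == s + o) || (t == s + o) | t <- iota o m].
Proof.
elim: m => [|m IH] o s //=.
case: s => [|[|s]] /=.
- rewrite add0n eqxx orbT; congr (_ :: _); apply/eq_in_map => t.
  rewrite mem_iota => /andP [H1 _].
  have -> : (t.+1 == o) = false by apply/negbTE; rewrite neq_ltn; apply/orP; right; lia.
  have -> : (t == o) = false by apply/negbTE; rewrite neq_ltn; apply/orP; right; lia.
  by rewrite !orbF.
- rewrite add1n eqxx orbT; case: m IH => [|m] IH //=.
  rewrite eqxx !orbT; congr (_ :: _ :: _); apply/eq_in_map => t.
  rewrite mem_iota => /andP [H1 _].
  have -> : (t.+1 == o.+1) = false by apply/negbTE; rewrite neq_ltn; apply/orP; right; lia.
  have -> : (t == o.+1) = false by apply/negbTE; rewrite neq_ltn; apply/orP; right; lia.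
  by rewrite !orbF.
- have -> : (o.+1 == s.+2 + o) = false by apply/negbTE; rewrite neq_ltn; apply/orP; left; lia.
  have -> : (o == s.+2 + o) = false by apply/negbTE; rewrite neq_ltn; apply/orP; left; lia.
  rewrite !orbF IH; congr (_ :: _); apply/eq_map => t.
  by rewrite addSn addnS.
Qed.

Lemma foldr_min_ge (T : eqType) (F : T -> nat) c (u : T) us :
  (forall x, x \in u :: us -> c <= F x) -> c <= foldr (fun x m => minn (F x) m) (F u) us.
Proof.
elim: us => [|y us IH] H /=; first by apply: H; rewrite mem_head.
rewrite leq_min H /=; last by rewrite !inE eqxx orbT.
apply: IH => x; rewrite !inE => /orP [E|Hx]; apply: H; by rewrite !inE ?E ?Hx ?orbT.
Qed.

Lemma foldr_min_le (T : eqType) (F : T -> nat) c (u : T) us x :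
  x \in u :: us -> F x <= c -> foldr (fun x m => minn (F x) m) (F u) us <= c.
Proof.
elim: us => [|y us IH] /=; first by rewrite inE => /eqP ->.
move=> Hx Hc; rewrite geq_min; move: Hx; rewrite !inE => /orP [E|/orP [/eqP E|Hx]].
- by rewrite IH ?orbT // inE E.
- by subst; rewrite Hc.
- by rewrite IH ?orbT // inE Hx orbT.
Qed.

Lemma foldr_max_le (T : eqType) (F : T -> nat) c (u : T) us :
  (forall x, x \in u :: us -> F x <= c) -> foldr (fun x m => maxn (F x) m) (F u) us <= c.
Proof.
elim: us => [|y us IH] H /=; first by apply: H; rewrite mem_head.
rewrite geq_max H /=; last by rewrite !inE eqxx orbT.
apply: IH => x; rewrite !inE => /orP [E|Hx]; apply: H; by rewrite !inE ?E ?Hx ?orbT.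
Qed.

Lemma foldr_max_ge (T : eqType) (F : T -> nat) c (u : T) us x :
  x \in u :: us -> c <= F x -> c <= foldr (fun x m => maxn (F x) m) (F u) us.
Proof.
elim: us => [|y us IH] /=; first by rewrite inE => /eqP ->.
move=> Hx Hc; rewrite leq_max; move: Hx; rewrite !inE => /orP [E|/orP [/eqP E|Hx]].
- by rewrite IH ?orbT // inE E.
- by subst; rewrite Hc.
- by rewrite IH ?orbT // inE Hx orbT.
Qed.

Lemma arith_all k a b c0 s0 : (k = a + b + 1 /\ (a = 0 \/ b = 0) \/ k = a + b + 2) ->
  s0 + base k + (c0 + c2n k) %/ 2 <= (s0 + base a + base b + (c0 + c2n a + c2n b + 1) %/ 2).+1 /\
  (s0 + base a + base b + (c0 + c2n a + c2n b) %/ 2).+1 <= s0 + base k + (c0 + c2n k + 1) %/ 2.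
Proof. rewrite /base /c2n. lia. Qed.

Lemma gvalS (T : finType) (e : rel T) k dom D : gval e k.+1 dom D =
  (let f u := (gval e k (~~ dom) (D :|: nbhd e u)).+1 in
   match legal_moves e D with
   | [::] => 0
   | u :: us => if dom then foldr (fun x m => minn (f x) m) (f u) us
                else foldr (fun x m => maxn (f x) m) (f u) us
   end).
Proof. by []. Qed.

Lemma mem_split (s : seq nat) x : x \in s -> exists s1 s2, s = s1 ++ x :: s2.
Proof.
elim: s => [|y s IH] //; rewrite inE => /orP [/eqP ->|/IH [s1 [s2 ->]]].
  by exists [::], s.
by exists (y :: s1), s2.
Qed.

Lemma pos_c2n (r : seq nat) : 0 < sumn (map c2n r) -> exists2 k, k \in r & 0 < c2n k.
Proof.
elim: r => [|y r IH] //=; case: (posnP (c2n y)) => [->|Hy] /=.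
  by move/IH => [k Hk Hk']; exists k => //; rewrite inE Hk orbT.
by move=> _; exists y => //; rewrite inE eqxx.
Qed.

Lemma runs_zero l : (forall k, k \in runs l -> k = 0) -> all id l.
Proof.
elim: l => [|[] l IH] //= H.
  by apply: IH => k Hk; apply: H; rewrite inE Hk orbT.
case: (runs_cons l) H => h [t ->] /= H.
by move: (H h.+1); rewrite inE eqxx => /(_ isT).
Qed.

Lemma all_nseq l : all id l -> l = nseq (size l) true.
Proof. by elim: l => [|[] l IH] //= /IH <-. Qed.

Lemma SL_true j : SL (nseq j true) = 0 /\ CL (nseq j true) = 0.
Proof. by elim: j => [|j [IH1 IH2]] //; rewrite /SL /CL /= -/(SL _) -/(CL _) IH1 IH2. Qed.

Lemma eqnE (a b c d : nat) : (a = b <-> c = d) -> (a == b) = (c == d).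
Proof. by move=> [H1 H2]; apply/eqP/eqP. Qed.

Section Game.
Variables (n m : nat) (T : finType) (e : rel T) (f : T -> 'I_n) (g : 'I_n -> T).
Hypotheses (Hnm : n = m + m) (fK : cancel f g) (gK : cancel g f)
  (He : forall x y, e x y = path_rel (f x) (f y)) (Hn2 : 2 <= n).

Definition dmn (D : {set T}) j := [exists x in D, (f x : nat) == j].
Definition EL D := [seq dmn D (2 * t) | t <- iota 0 m].
Definition OL D := [seq dmn D (2 * t + 1) | t <- iota 0 m].
Definition SS D := SL (EL D) + SL (OL D).
Definition CC D := CL (EL D) + CL (OL D).
Definition Phi D (dom : bool) := SS D + (CC D + ~~ dom) %/ 2.

Lemma dmn_in D x : dmn D (f x) = (x \in D).
Proof.
apply/existsP/idP => [[y /andP [Hy /eqP E]]|Hx]; last by exists x; rewrite Hx eqxx.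
have E' : f y = f x by apply: val_inj.
by rewrite -(can_inj fK E').
Qed.

Lemma dmn_U D u j : j < n ->
  dmn (D :|: nbhd e u) j = [|| dmn D j, (f u).+1 == j | j.+1 == f u].
Proof.
move=> Hj; apply/existsP/idP.
  move=> [x /andP [Hx /eqP E]]; move: Hx; rewrite inE => /orP [Hx|].
    by apply/orP; left; apply/existsP; exists x; rewrite Hx E eqxx.
  by rewrite /nbhd inE He /path_rel E => ->; rewrite orbT.
case/orP => [/existsP [x /andP [Hx Ex]]|H].
  by exists x; rewrite inE Hx Ex.
exists (g (Ordinal Hj)); rewrite inE /nbhd inE He /path_rel gK /=.
by rewrite H orbT eqxx.
Qed.

Lemma size_EL D : size (EL D) = m. Proof. by rewrite size_map size_iota. Qed.
Lemma size_OL D : size (OL D) = m. Proof. by rewrite size_map size_iota. Qed.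
Lemma nth_EL D t : t < m -> nth false (EL D) t = dmn D (2 * t).
Proof. by move=> Ht; rewrite (nth_map 0) ?size_iota // nth_iota. Qed.
Lemma nth_OL D t : t < m -> nth false (OL D) t = dmn D (2 * t + 1).
Proof. by move=> Ht; rewrite (nth_map 0) ?size_iota // nth_iota. Qed.

Lemma lists_set D1 D2 : EL D1 = EL D2 -> OL D1 = OL D2 -> D1 = D2.
Proof.
move=> E1 E2; apply/setP => x; rewrite -!dmn_in.
have Hx := ltn_ord (f x).
have Ht : (f x) %/ 2 < m by lia.
have [H|H] : (f x : nat) = 2 * ((f x) %/ 2) \/ (f x : nat) = 2 * ((f x) %/ 2) + 1 by lia.
  by rewrite H -!nth_EL // E1.
by rewrite H -!nth_OL // E2.
Qed.

Lemma upd_odd D u i : (f u : nat) = 2 * i + 1 ->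
  EL (D :|: nbhd e u) = updr (EL D) i.+1 /\ OL (D :|: nbhd e u) = OL D.
Proof.
move=> Hu; have Hi : i < m by move: (ltn_ord (f u)); lia.
split; [rewrite /EL updr_map|]; apply/eq_in_map => t; rewrite mem_iota => /andP [_ Ht];
  (rewrite dmn_U; last by lia); rewrite Hu.
  rewrite (@eqnE ((2 * i + 1).+1) (2 * t) t (i.+1 + 0)); last by split; lia.
  rewrite (@eqnE ((2 * t).+1) (2 * i + 1) t.+1 (i.+1 + 0)); last by split; lia.
  by rewrite -!orbA (orbC (t == _)).
have -> : ((2 * i + 1).+1 == 2 * t + 1) = false by apply/eqP; lia.
have -> : ((2 * t + 1).+1 == 2 * i + 1) = false by apply/eqP; lia.
by rewrite !orbF.
Qed.

Lemma upd_even D u i : (f u : nat) = 2 * i ->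
  OL (D :|: nbhd e u) = updr (OL D) i /\ EL (D :|: nbhd e u) = EL D.
Proof.
move=> Hu; have Hi : i < m by move: (ltn_ord (f u)); lia.
split; [rewrite /OL updr_map|]; apply/eq_in_map => t; rewrite mem_iota => /andP [_ Ht];
  (rewrite dmn_U; last by lia); rewrite Hu.
  rewrite (@eqnE ((2 * i).+1) (2 * t + 1) t (i + 0)); last by split; lia.
  rewrite (@eqnE ((2 * t + 1).+1) (2 * i) t.+1 (i + 0)); last by split; lia.
  by rewrite -!orbA (orbC (t == _)).
have -> : ((2 * i).+1 == 2 * t) = false by apply/eqP; lia.
have -> : ((2 * t).+1 == 2 * i) = false by apply/eqP; lia.
by rewrite !orbF.
Qed.

Lemma legal_neq D u : legal e D u -> D :|: nbhd e u != D.
Proof.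
rewrite /legal => /existsP [w /andP [Hw HnD]]; apply/negP => /eqP E.
have : w \in D :|: nbhd e u by rewrite inE /nbhd inE Hw orbT.
by rewrite E (negbTE HnD).
Qed.

Lemma nlegal_eq D u : ~~ legal e D u -> D :|: nbhd e u = D.
Proof.
move=> NL; apply/setP => x; rewrite inE; case Hx: (x \in D) => //=.
rewrite /nbhd inE; apply/negbTE; apply: contra NL => H.
by apply/existsP; exists x; rewrite H Hx.
Qed.

Lemma legal_E D u : EL (D :|: nbhd e u) != EL D -> legal e D u.
Proof.
case L: (legal e D u) => //; by rewrite nlegal_eq ?L ?eqxx.
Qed.
Lemma legal_O D u : OL (D :|: nbhd e u) != OL D -> legal e D u.
Proof.
case L: (legal e D u) => //; by rewrite nlegal_eq ?L ?eqxx.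
Qed.


Lemma bell_all D u : legal e D u ->
  Phi D true <= (Phi (D :|: nbhd e u) false).+1 /\ (Phi (D :|: nbhd e u) true).+1 <= Phi D false.
Proof.
move=> L; have N := legal_neq L.
have Hp := ltn_ord (f u).
have [H|H] : (f u : nat) = 2 * (f u %/ 2) + 1 \/ (f u : nat) = 2 * (f u %/ 2) by lia.
- case: (upd_odd D H) => E1 E2.
  have NE : updr (EL D) (f u %/ 2).+1 != EL D.
    rewrite -E1; apply: contra N => /eqP E; apply/eqP; apply: lists_set => //.
  case: (Eff NE) => k [a [b [S0 [C0 [Hc [H1 [H2 [H3 H4]]]]]]]].
  move: (arith_all (C0 + CL (OL D)) (S0 + SL (OL D)) Hc).
  rewrite /Phi /SS /CC E1 E2 H1 H2 H3 H4 /=; lia.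
- case: (upd_even D H) => E1 E2.
  have NE : updr (OL D) (f u %/ 2) != OL D.
    rewrite -E1; apply: contra N => /eqP E; apply/eqP; apply: lists_set => //.
  case: (Eff NE) => k [a [b [S0 [C0 [Hc [H1 [H2 [H3 H4]]]]]]]].
  move: (arith_all (C0 + CL (EL D)) (S0 + SL (EL D)) Hc).
  rewrite /Phi /SS /CC E1 E2 H1 H2 H3 H4 /=; lia.
Qed.

Lemma H_E D s : 0 < s <= m ->
  exists u, EL (D :|: nbhd e u) = updr (EL D) s /\ OL (D :|: nbhd e u) = OL D.
Proof.
move=> Hs; have Hp : 2 * s.-1 + 1 < n by lia.
exists (g (Ordinal Hp)); have := @upd_odd D (g (Ordinal Hp)) s.-1.
by rewrite gK prednK //; [apply | lia].
Qed.

Lemma H_O D s : s < m ->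
  exists u, OL (D :|: nbhd e u) = updr (OL D) s /\ EL (D :|: nbhd e u) = EL D.
Proof.
move=> Hs; have Hp : 2 * s < n by lia.
exists (g (Ordinal Hp)); have := @upd_even D (g (Ordinal Hp)) s.
by rewrite gK; apply.
Qed.

Lemma sum_ctx L rA k rB A B Y : runs L = rA ++ k :: rB -> L = A ++ nseq k false ++ B ->
  bndA A rA -> bndB B rB ->
  SL (A ++ Y ++ B) + base k = SL L + sumn (map base (runs Y)) /\
  CL (A ++ Y ++ B) + c2n k = CL L + sumn (map c2n (runs Y)).
Proof.
move=> E _ HA HB; rewrite /SL /CL (runs_ctx _ HA HB) E !SL_cat !CL_cat /=; lia.
Qed.

Lemma count_Y (k j : nat) (Y : seq bool) : 0 < count id Y -> count id (nseq k false) < count id Y.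
Proof. by rewrite count_nseq /= mul0n. Qed.

Lemma ex_end D k : (k \in runs (EL D)) || (k \in runs (OL D)) -> 0 < k ->
  exists u, legal e D u /\ SS (D :|: nbhd e u) + base k = SS D + base (k - 1) /\
            CC (D :|: nbhd e u) + c2n k = CC D + c2n (k - 1).
Proof.
move=> /orP [Hk|Hk] k0.
- case: (mem_split Hk) => rA [rB E]; case: (runs_split E) => A [B [EL' [HA HB]]].
  have Hs : size A + k <= m by rewrite -(size_EL D) EL' !size_cat size_nseq; lia.
  case: (@H_E D (size A + k)) => [|u [E1 E2]]; first by apply/andP; split; lia.
  have E1' : EL (D :|: nbhd e u) = A ++ (nseq (k-1) false ++ [:: true]) ++ B.
    by rewrite E1 EL' (mv_endR _ k0 HB).
  exists u; split.
    apply: legal_E; rewrite E1' EL'; apply: count_ctx; apply: count_Y => //.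
    by rewrite count_cat /= addn1.
  case: (sum_ctx (nseq (k-1) false ++ [:: true]) E EL' HA HB).
  rewrite -E1' runs_Y2 /SS /CC E2 /= sum_base0 sum_c2n0; lia.
- case: (mem_split Hk) => rA [rB E]; case: (runs_split E) => A [B [EL' [HA HB]]].
  have Hs : size A + k <= m by rewrite -(size_OL D) EL' !size_cat size_nseq; lia.
  case: (@H_O D (size A)) => [|u [E1 E2]]; first by lia.
  have E1' : OL (D :|: nbhd e u) = A ++ (true :: nseq (k-1) false) ++ B.
    by rewrite E1 EL' (mv_endL B k0 HA).
  exists u; split.
    apply: legal_O; rewrite E1' EL'; apply: count_ctx; apply: count_Y => //.
  case: (sum_ctx (true :: nseq (k-1) false) E EL' HA HB).
  rewrite -E1' runs_Y3 /SS /CC E2 /= sum_base0 sum_c2n0; lia.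
Qed.

Lemma ex_first2 D k : (k \in runs (EL D)) || (k \in runs (OL D)) -> 1 < k ->
  exists u, legal e D u /\ SS (D :|: nbhd e u) + base k = SS D + base (k - 2) /\
            CC (D :|: nbhd e u) + c2n k = CC D + c2n (k - 2).
Proof.
move=> /orP [Hk|Hk] k1.
- case: (mem_split Hk) => rA [rB E]; case: (runs_split E) => A [B [EL' [HA HB]]].
  have Hs : size A + k <= m by rewrite -(size_EL D) EL' !size_cat size_nseq; lia.
  case: (@H_E D (size A + 1)) => [|u [E1 E2]]; first by apply/andP; split; lia.
  have E1' : EL (D :|: nbhd e u) = A ++ (true :: true :: nseq (k - 2) false) ++ B.
    by rewrite E1 EL' (mv_first2 _ _ k1).
  exists u; split.
    apply: legal_E; rewrite E1' EL'; apply: count_ctx; apply: count_Y => //.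
  case: (sum_ctx (true :: true :: nseq (k - 2) false) E EL' HA HB).
  rewrite -E1' runs_Y1 /SS /CC E2 /= sum_base0 sum_c2n0; lia.
- case: (mem_split Hk) => rA [rB E]; case: (runs_split E) => A [B [EL' [HA HB]]].
  have Hs : size A + k <= m by rewrite -(size_OL D) EL' !size_cat size_nseq; lia.
  case: (@H_O D (size A + 1)) => [|u [E1 E2]]; first by lia.
  have E1' : OL (D :|: nbhd e u) = A ++ (true :: true :: nseq (k - 2) false) ++ B.
    by rewrite E1 EL' (mv_first2 _ _ k1).
  exists u; split.
    apply: legal_O; rewrite E1' EL'; apply: count_ctx; apply: count_Y => //.
  case: (sum_ctx (true :: true :: nseq (k - 2) false) E EL' HA HB).
  rewrite -E1' runs_Y1 /SS /CC E2 /= sum_base0 sum_c2n0; lia.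
Qed.


Lemma EL_T : EL setT = nseq m true /\ OL setT = nseq m true.
Proof.
have dT : forall j, j < n -> dmn setT j.
  by move=> j Hj; apply/existsP; exists (g (Ordinal Hj)); rewrite inE gK eqxx.
split; [rewrite -(size_EL setT)|rewrite -(size_OL setT)]; apply: all_nseq;
  apply/allP => b /mapP [t]; rewrite mem_iota => /andP [_ Ht] ->; apply: dT; lia.
Qed.

Lemma Phi_T dom : Phi setT dom = 0.
Proof.
case: EL_T => E1 E2; rewrite /Phi /SS /CC E1 E2.
case: (SL_true m) => -> ->; by case: dom.
Qed.

Lemma exists_run D : D != setT -> exists2 k, 0 < k & (k \in runs (EL D)) || (k \in runs (OL D)).
Proof.
move=> ND.
case H1: (has (fun k => 0 < k) (runs (EL D))).
  by case/hasP: H1 => k Hk k0; exists k => //; rewrite Hk.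
case H2: (has (fun k => 0 < k) (runs (OL D))).
  by case/hasP: H2 => k Hk k0; exists k => //; rewrite Hk orbT.
exfalso; move/negP: ND; apply; apply/eqP.
case: EL_T => E1 E2; apply: lists_set.
  rewrite E1 -(size_EL D); apply: all_nseq; apply: runs_zero => k Hk.
  by apply/eqP; rewrite -leqn0 leqNgt; apply: contraFN H1 => H; apply/hasP; exists k.
rewrite E2 -(size_OL D); apply: all_nseq; apply: runs_zero => k Hk.
by apply/eqP; rewrite -leqn0 leqNgt; apply: contraFN H2 => H; apply/hasP; exists k.
Qed.

Lemma pos_CC D : 0 < CC D -> exists2 k, 0 < c2n k & (k \in runs (EL D)) || (k \in runs (OL D)).
Proof.
rewrite /CC; case: (posnP (CL (EL D))) => HE /=.
  rewrite HE add0n => /pos_c2n [k Hk Hk']; exists k => //; by rewrite Hk orbT.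
move=> _; case: (pos_c2n HE) => k Hk Hk'; exists k => //; by rewrite Hk.
Qed.

Lemma term D : legal_moves e D = [::] -> D = setT.
Proof.
move=> Hl; apply/setP => x; rewrite inE.
have Hx := ltn_ord (f x).
have [u Hu] : exists u, e u x.
  case: (ltnP (f x).+1 n) => H.
    by exists (g (Ordinal H)); rewrite He /path_rel gK /= eqxx orbT.
  have H' : (f x).-1 < n by lia.
  exists (g (Ordinal H')); rewrite He /path_rel gK /=; apply/orP; left; apply/eqP; lia.
have : u \in legal_moves e D = legal e D u by rewrite mem_filter mem_enum andbT.
rewrite Hl in_nil => /esym /negbT; rewrite /legal => /existsPn /(_ x).
by rewrite Hu /= negbK.
Qed.

Lemma ex_dom D : D != setT ->
  exists2 u, legal e D u & (Phi (D :|: nbhd e u) false).+1 <= Phi D true.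
Proof.
move=> ND; case: (boolP (odd (CC D))) => Hodd.
  have Hm : CC D %% 2 = 1 by rewrite modn2 Hodd.
  have : 0 < CC D by lia.
  case/pos_CC => k Hk Hk'.
  have k1 : 1 < k by move: Hk; rewrite /c2n; lia.
  case: (ex_first2 Hk' k1) => u [L [H1 H2]]; exists u => //.
  move: Hk; rewrite /Phi /=; rewrite /c2n /base in H1 H2 *; lia.
have Hm : CC D %% 2 = 0 by rewrite modn2 (negbTE Hodd).
case: (exists_run ND) => k k0 Hk.
case: (boolP (k %% 3 == 1)) => /eqP Hk3.
  case: (ex_end Hk k0) => u [L [H1 H2]]; exists u => //.
  rewrite /Phi /=; rewrite /c2n /base in H1 H2 *; lia.
have k1 : 1 < k by lia.
case: (ex_first2 Hk k1) => u [L [H1 H2]]; exists u => //.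
rewrite /Phi /=; rewrite /c2n /base in H1 H2 *; lia.
Qed.

Lemma ex_sta D : D != setT ->
  exists2 u, legal e D u & Phi D false <= (Phi (D :|: nbhd e u) true).+1.
Proof.
move=> ND; case: (posnP (CC D)) => HC.
  case: (exists_run ND) => k k0 Hk.
  case: (ex_end Hk k0) => u [L [H1 H2]]; exists u => //.
  rewrite /Phi /=; rewrite /c2n /base in H1 H2 *; lia.
case/pos_CC: HC => k Hk Hk'.
have k0 : 0 < k by move: Hk; rewrite /c2n; lia.
case: (ex_end Hk' k0) => u [L [H1 H2]]; exists u => //.
move: Hk; rewrite /Phi /=; rewrite /c2n /base in H1 H2 *; lia.
Qed.

Lemma main k : forall dom (D : {set T}), #|T| < #|D| + k -> gval e k dom D = Phi D dom.
Proof.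
elim: k => [|k IH] dom D Hk.
  by move: (max_card D); lia.
rewrite gvalS /=; case Hl: (legal_moves e D) => [|u us].
  by rewrite (term Hl) Phi_T.
have Hin : forall x, (x \in u :: us) = legal e D x.
  by move=> x; rewrite -Hl mem_filter mem_enum andbT.
have ND : D != setT.
  have : u \in u :: us by rewrite mem_head.
  rewrite Hin; apply: contraL => /eqP ->.
  by rewrite /legal; apply/existsPn => x; rewrite inE andbF.
have IHx : forall x, legal e D x ->
    gval e k (~~ dom) (D :|: nbhd e x) = Phi (D :|: nbhd e x) (~~ dom).
  move=> x Lx; apply: IH.
  have : D \proper D :|: nbhd e x by rewrite properEneq eq_sym legal_neq // subsetUl.
  move/proper_card; lia.
case: dom IHx => IHx; apply/eqP; rewrite eqn_leq; apply/andP; split.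
- case: (ex_dom ND) => x Lx Hx; apply: (foldr_min_le (x := x)); first by rewrite Hin.
  by rewrite IHx.
- apply: foldr_min_ge => x; rewrite Hin => Lx; rewrite IHx //.
  by case: (bell_all Lx).
- apply: foldr_max_le => x; rewrite Hin => Lx; rewrite IHx //.
  by case: (bell_all Lx).
- case: (ex_sta ND) => x Lx Hx; apply: (foldr_max_ge (x := x)); first by rewrite Hin.
  by rewrite IHx.
Qed.

End Game.

Lemma map_false (s : seq nat) : [seq false | t <- s] = nseq (size s) false.
Proof. by elim: s => //= x s ->. Qed.

Lemma map_eq1 m i : i < m ->
  [seq i == t | t <- iota 0 m] = nseq i false ++ true :: nseq (m - i.+1) false.
Proof.
move=> Hi; have -> : m = i + (m - i.+1).+1 by lia.
rewrite iotaD map_cat add0n /= eqxx; congr (_ ++ _ :: _).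
  transitivity [seq false | t <- iota 0 i]; last by rewrite map_false size_iota.
  apply/eq_in_map => t; rewrite mem_iota => /andP [_ Ht]; apply/eqP; lia.
have -> : i + (m - i.+1).+1 - i.+1 = m - i.+1 by lia.
transitivity [seq false | t <- iota i.+1 (m - i.+1)]; last by rewrite map_false size_iota.
apply/eq_in_map => t; rewrite mem_iota => /andP [Ht _]; apply/eqP; lia.
Qed.

Lemma SL_split m i : i < m ->
  SL (nseq i false ++ true :: nseq (m - i.+1) false) = base i + base (m - i.+1) /\
  CL (nseq i false ++ true :: nseq (m - i.+1) false) = c2n i + c2n (m - i.+1).
Proof.
by move=> Hi; rewrite /SL /CL runs_cat_true !runs_nseq /= !addn0.
Qed.

Theorem lemma3p5 (n : nat) (T : finType) (e : rel T) (f : T -> 'I_n) :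
  2 <= n -> n %% 6 = 2 ->
  bijective f -> (forall x y : T, e x y = @path_rel n (f x) (f y)) ->
  forall v : T, gamma_tg_at e v <= gamma_tg e - 1.
Proof.
move=> Hn2 H6 [g fK gK] He v.
pose m := n %/ 2.
have Hnm : n = m + m by rewrite /m; lia.
rewrite /gamma_tg_at /gamma_tg !(main Hnm fK gK He) ?cards1 ?cards0; try lia.
have d0 : forall j, dmn f set0 j = false.
  by move=> j; apply/existsP => [[x]]; rewrite inE.
have d1 : forall j, dmn f [set v] j = ((f v : nat) == j).
  move=> j; apply/existsP/idP => [[x /andP [/set1P -> //]]|H].
  by exists v; rewrite inE eqxx.
have E0 : EL m f set0 = nseq m false /\ OL m f set0 = nseq m false.
  by rewrite /EL /OL; split; rewrite (@eq_map _ _ _ (fun=> false)) ?map_false ?size_iota // => t; rewrite d0.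
rewrite /Phi /SS /CC.
case: E0 => -> ->.
have Hfv := ltn_ord (f v).
have [H|H] : (f v : nat) = 2 * ((f v) %/ 2) + 1 \/ (f v : nat) = 2 * ((f v) %/ 2) by lia.
- set i := (f v) %/ 2 in H.
  have Hi : i < m by rewrite /m; lia.
  have -> : EL m f [set v] = nseq m false.
    rewrite /EL (@eq_map _ _ _ (fun=> false)) ?map_false ?size_iota // => t.
    by rewrite d1 H; apply/eqP; lia.
  have -> : OL m f [set v] = nseq i false ++ true :: nseq (m - i.+1) false.
    rewrite /OL -map_eq1 //; apply/eq_map => t; rewrite d1 H; apply/idP/idP => /eqP Ht; apply/eqP; lia.
  case: (SL_split Hi) => -> ->.
  rewrite /SL /CL !runs_nseq /= /base /c2n; lia.
- set i := (f v) %/ 2 in H.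
  have Hi : i < m by rewrite /m; lia.
  have -> : OL m f [set v] = nseq m false.
    rewrite /OL (@eq_map _ _ _ (fun=> false)) ?map_false ?size_iota // => t.
    by rewrite d1 H; apply/eqP; lia.
  have -> : EL m f [set v] = nseq i false ++ true :: nseq (m - i.+1) false.
    rewrite /EL -map_eq1 //; apply/eq_map => t; rewrite d1 H; apply/idP/idP => /eqP Ht; apply/eqP; lia.
  case: (SL_split Hi) => -> ->.
  rewrite /SL /CL !runs_nseq /= /base /c2n; lia.
Qed.
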